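(* Let $\alpha\in(0,1)\cup(1,2)$ and let $\rho_{AB}$ be a state on a finite-dimensional $\mathcal{H}_A\otimes\mathcal{H}_B$. Then $$E^F_{(2-\alpha)/\alpha}(A;B)_\rho\geq E^{\mathrm{sq}}_\alpha(A;B)_\rho.$$
   Context: All Hilbert spaces are finite-dimensional and $\log$ is the natural logarithm. For a positive semi-definite $M$ and function $f$, $f(M)$ applies $f$ only to nonzero eigenvalues (negative powers are generalized inverses). For a state $\rho_{ABE}$ and $\alpha\in(0,1)\cup(1,\infty)$, $$I_\alpha(A;B|E)_\rho=\frac{\alpha}{\alpha-1}\log\mathrm{Tr}\Big\{\Big(\rho_E^{(\alpha-1)/2}\,\mathrm{Tr}_A\big\{\rho_{AE}^{(1-\alpha)/2}\rho_{ABE}^{\alpha}\rho_{AE}^{(1-\alpha)/2}\big\}\,\rho_E^{(\alpha-1)/2}\Big)^{1/\alpha}\Big\},$$ and the Rényi squashed entanglement is $E^{\mathrm{sq}}_\alpha(A;B)_\rho=\frac12\inf\{I_\alpha(A;B|E)_\omega:\ \mathrm{Tr}_E\omega_{ABE}=\rho_{AB}\}$ over all extensions on finite-dimensional $\mathcal{H}_E$. For $\beta\in(0,1)\cup(1,\infty)$ the Rényi conditional entropy is $H_\beta(A|B)_\rho=\frac{\beta}{1-\beta}\log\mathrm{Tr}\{(\mathrm{Tr}_A\{\rho_{AB}^\beta\})^{1/\beta}\}$, and the Rényi entanglement of formation is $E^F_\beta(A;B)_\rho=\inf\{H_\beta(A|X)_\sigma:\ \rho_{AB}=\sum_x p_X(x)|\psi^x\rangle\langle\psi^x|_{AB}\}$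 over finite pure-state ensembles, with $\sigma_{XAB}=\sum_x p_X(x)|x\rangle\langle x|_X\otimes|\psi^x\rangle\langle\psi^x|_{AB}$, $\{|x\rangle\}$ orthonormal. *)

(* Defs.v *)
From HB Require Import structures.
From mathcomp Require Import all_boot all_order all_algebra.
From mathcomp Require Import complex mxtens.
From mathcomp Require Import boolp classical_sets reals ereal exp.

Set Implicit Arguments.
Unset Strict Implicit.
Unset Printing Implicit Defensive.

Import Order.TTheory GRing.Theory Num.Theory.
Local Open Scope ring_scope.

Section Quantum.
Variable R : realType.
Local Notation C := R[i].

Definition adj m n (M : 'M[C]_(m, n)) : 'M[C]_(n, m) :=
  \matrix_(i, j) (M j i)^*.

Definition psd n (M : 'M[C]_n) : Prop :=
  adj M = M /\ forall v : 'cV[C]_n, 0 <= (adj v *m M *m v) 0 0.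

Definition density n (M : 'M[C]_n) : Prop := psd M /\ \tr M = 1.

(* Functional calculus for a psd (hence normal) matrix, through the spectral
   decomposition M = U^-1 diag(d) U of the library: f is applied only to the
   nonzero eigenvalues, zero eigenvalues are mapped to 0. *)
Definition mxfun n (f : R -> R) (M : 'M[C]_n) : 'M[C]_n :=
  let U := spectralmx M in
  let d := spectral_diag M in
  invmx U *m diag_mx (\row_i (if d 0 i == 0 then 0
                              else ((f (complex.Re (d 0 i)))%:C)%C)) *m U.

(* real power M^p on the support of M (negative p: generalized inverse) *)
Definition mxpow n (M : 'M[C]_n) (p : R) : 'M[C]_n :=
  mxfun (fun x => powR x p) M.

(* Tensor product conventions: H_X (x) H_Y has dimension m * n, the basis
   vector |i>|j> having index mxtens_index (i, j) (Kronecker convention). *)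
Local Notation tidx i j := (mxtens_index (i, j)).

Definition ptr1 m n (M : 'M[C]_(m * n)) : 'M[C]_n :=
  \matrix_(j, j') \sum_(i < m) M (tidx i j) (tidx i j').

Definition ptr2 m n (M : 'M[C]_(m * n)) : 'M[C]_m :=
  \matrix_(i, i') \sum_(j < n) M (tidx i j) (tidx i' j).

(* Tr over the middle factor B: operator on H_A (x) H_E *)
Definition ptr_mid a b e (M : 'M[C]_(a * b * e)) : 'M[C]_(a * e) :=
  \matrix_(k, k')
    \sum_(y < b) M (tidx (tidx (mxtens_unindex k).1 y) (mxtens_unindex k).2)
                   (tidx (tidx (mxtens_unindex k').1 y) (mxtens_unindex k').2).

(* X_AE (x) 1_B as an operator on (H_A (x) H_B) (x) H_E *)
Definition ext_mid a b e (X : 'M[C]_(a * e)) : 'M[C]_(a * b * e) :=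
  \matrix_(k, k')
    (X (tidx (mxtens_unindex (mxtens_unindex k).1).1 (mxtens_unindex k).2)
       (tidx (mxtens_unindex (mxtens_unindex k').1).1 (mxtens_unindex k').2)
     * ((mxtens_unindex (mxtens_unindex k).1).2
         == (mxtens_unindex (mxtens_unindex k').1).2)%:R).

Definition ptr_first a b e (M : 'M[C]_(a * b * e)) : 'M[C]_(b * e) :=
  \matrix_(k, k')
    \sum_(x < a) M (tidx (tidx x (mxtens_unindex k).1) (mxtens_unindex k).2)
                   (tidx (tidx x (mxtens_unindex k').1) (mxtens_unindex k').2).

Definition renyi_cmi (alpha : R) a b e (rho : 'M[C]_(a * b * e)) : R :=
  let rhoE := ptr1 rho in
  let rhoAE := ptr_mid rho in
  let SAE := ext_mid b (mxpow rhoAE ((1 - alpha) / 2)) in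
  let inner := ptr_first (SAE *m mxpow rho alpha *m SAE) in
  let SE := (1%:M : 'M[C]_b) *t mxpow rhoE ((alpha - 1) / 2) in
  alpha / (alpha - 1) *
    ln (complex.Re (\tr (mxpow (SE *m inner *m SE) (1 / alpha)))).

Definition renyi_sq_ent (alpha : R) a b (rho : 'M[C]_(a * b)) : \bar R :=
  ((1 / 2)%:E * ereal_inf
     [set x : \bar R | exists (e : nat) (omega : 'M[C]_(a * b * e)),
         density omega /\ ptr2 omega = rho /\ x = (renyi_cmi alpha omega)%:E])%E.

Definition renyi_cond_ent (beta : R) a b (rho : 'M[C]_(a * b)) : R :=
  beta / (1 - beta) *
    ln (complex.Re (\tr (mxpow (ptr1 (mxpow rho beta)) (1 / beta)))).

Definition proj n (psi : 'cV[C]_n) : 'M[C]_n := psi *m adj psi.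

Definition cq_state a b k (p : 'I_k -> R) (psi : 'I_k -> 'cV[C]_(a * b))
  : 'M[C]_(a * b * k) :=
  \sum_(x < k) (((p x)%:C)%C *: (proj (psi x) *t delta_mx x x)).

Definition renyi_eof (beta : R) a b (rho : 'M[C]_(a * b)) : \bar R :=
  ereal_inf
    [set y : \bar R | exists (k : nat) (p : 'I_k -> R)
                             (psi : 'I_k -> 'cV[C]_(a * b)),
        (forall x, 0 <= p x) /\ \sum_(x < k) p x = 1 /\
        (forall x, (adj (psi x) *m psi x) 0 0 = 1) /\
        rho = \sum_(x < k) (((p x)%:C)%C *: proj (psi x)) /\
        y = (renyi_cond_ent beta (ptr_mid (cq_state p psi)))%:E].

End Quantum.

(* Main.v *)
Require Import Defs.
From HB Require Import structures.
From mathcomp Require Import all_boot all_order all_algebra.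
From mathcomp Require Import complex mxtens.
From mathcomp Require Import boolp classical_sets reals ereal exp.
From mathcomp Require Import ring lra.
Import Order.TTheory GRing.Theory Num.Theory.
Local Open Scope ring_scope.
Set Implicit Arguments.
Unset Strict Implicit.
Unset Printing Implicit Defensive.

Section Q.
Variable R : realType.
Local Notation C := R[i].

Lemma cjM (x y : C) : (x * y)^* = x^* * y^*.
Proof. exact: rmorphM. Qed.
Lemma cjD (x y : C) : (x + y)^* = x^* + y^*.
Proof. exact: rmorphD. Qed.
Lemma cj_sum I (r : seq I) (P : pred I) (F : I -> C) :
  (\sum_(i <- r | P i) F i)^* = \sum_(i <- r | P i) (F i)^*.
Proof. exact: rmorph_sum. Qed.
Lemma cj_sumT I (r : seq I) (F : I -> C) :
  (\sum_(i <- r) F i)^* = \sum_(i <- r) (F i)^*.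
Proof. exact: (@cj_sum _ _ xpredT). Qed.

Lemma hadjK m n (M : 'M[C]_(m, n)) : adj (adj M) = M.
Proof. by apply/matrixP=> i j; rewrite !mxE conjCK. Qed.

Lemma hadj_mul m n p (A : 'M[C]_(m, n)) (B : 'M[C]_(n, p)) :
  adj (A *m B) = adj B *m adj A.
Proof.
apply/matrixP=> i j; rewrite !mxE (@cj_sum _ _ xpredT); apply: eq_bigr => k _.
by rewrite !mxE cjM mulrC.
Qed.

Lemma hadjD m n (A B : 'M[C]_(m, n)) : adj (A + B) = adj A + adj B.
Proof. by apply/matrixP=> i j; rewrite !mxE cjD. Qed.

Lemma hadjZ m n c (A : 'M[C]_(m, n)) : adj (c *: A) = c^* *: adj A.
Proof. by apply/matrixP=> i j; rewrite !mxE cjM. Qed.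

Lemma hadj_sum m n I (r : seq I) (P : pred I) (F : I -> 'M[C]_(m, n)) :
  adj (\sum_(i <- r | P i) F i) = \sum_(i <- r | P i) adj (F i).
Proof.
apply/matrixP=> i j; rewrite !mxE summxE (@cj_sum _ _ P) summxE; apply: eq_bigr => k _.
by rewrite mxE.
Qed.

Lemma hadj1 n : adj (1%:M : 'M[C]_n) = 1%:M.
Proof. by apply/matrixP=> i j; rewrite !mxE eq_sym; case: (_ == _); rewrite ?conjC0 ?conjC1. Qed.

Lemma hadj_diag n (d : 'rV[C]_n) : adj (diag_mx d) = diag_mx (\row_i (d 0 i)^*).
Proof.
apply/matrixP=> i j; rewrite !mxE eq_sym; case: eqP => [->|_]; last by rewrite !mulr0n conjC0.
by rewrite !mulr1n.
Qed.

Definition eigdec n (M : 'M[C]_n) (V : 'M[C]_n) (d : 'rV[C]_n) :=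
  V *m adj V = 1%:M /\ M = adj V *m diag_mx d *m V.

Definition Gf (f : R -> R) (z : C) : C :=
  if z == 0 then 0 else ((f (complex.Re z))%:C)%C.

Definition gmap (g : C -> C) n (d : 'rV[C]_n) : 'rV[C]_n := \row_i g (d 0 i).

Lemma gcomm m n (g : C -> C) (d : 'rV[C]_m) (e : 'rV[C]_n) (Q : 'M[C]_(m, n)) :
  diag_mx d *m Q = Q *m diag_mx e ->
  diag_mx (gmap g d) *m Q = Q *m diag_mx (gmap g e).
Proof.
rewrite mul_diag_mx mul_mx_diag => /matrixP H.
apply/matrixP=> i j; rewrite mul_diag_mx mul_mx_diag !mxE.
have := H i j; rewrite !mxE => Hij.
have [->|nz] := eqVneq (Q i j) 0; first by rewrite mulr0 mul0r.
have -> : d 0 i = e 0 j.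
  by apply: (mulIf nz); rewrite Hij mulrC.
by rewrite mulrC.
Qed.

Lemma eigdec_uniq n (M : 'M[C]_n) V d W e (g : C -> C) :
  eigdec M V d -> eigdec M W e ->
  adj V *m diag_mx (gmap g d) *m V = adj W *m diag_mx (gmap g e) *m W.
Proof.
move=> [HV EV] [HW EW].
have HV' := mulmx1C HV; have HW' := mulmx1C HW.
have DV : diag_mx d *m V = V *m M.
  by rewrite EV !mulmxA HV mul1mx.
have EW' : M *m adj W = adj W *m diag_mx e.
  by rewrite {1}EW -!mulmxA HW mulmx1.
have Hc : diag_mx d *m (V *m adj W) = (V *m adj W) *m diag_mx e.
  by rewrite mulmxA DV -!mulmxA EW'.
have Hg := gcomm g Hc.
transitivity (adj V *m (diag_mx (gmap g d) *m (V *m adj W)) *m W).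
  by rewrite !mulmxA -[_ *m adj W *m W]mulmxA HW' mulmx1.
by rewrite Hg !mulmxA HV' mul1mx.
Qed.

End Q.

Section Q2.
Variable R : realType.
Local Notation C := R[i].
Local Open Scope sesquilinear_scope.

Lemma hadjE m n (M : 'M[C]_(m, n)) : adj M = M ^t*.
Proof. by apply/matrixP=> i j; rewrite !mxE. Qed.

Lemma unitary_adj n (V : 'M[C]_n) : V *m adj V = 1%:M -> V \is unitarymx.
Proof. by move=> H; apply/unitarymxP; rewrite -hadjE. Qed.

Lemma spec_eigdec n (M : 'M[C]_n) : M \is normalmx ->
  eigdec M (spectralmx M) (spectral_diag M).
Proof.
move=> Mn; have SU := spectral_unitarymx M.
split; first by rewrite hadjE; apply/unitarymxP.
by rewrite hadjE -invmx_unitary //; apply/orthomx_spectralP.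
Qed.

Lemma eigdec_normal n (M : 'M[C]_n) V d : eigdec M V d -> M \is normalmx.
Proof.
move=> [HV EV].
apply/orthomx_spectral_subproof; exists (V, d) => /=; first exact: unitary_adj.
by rewrite invmx_unitary ?unitary_adj // -hadjE.
Qed.

Lemma herm_normal n (M : 'M[C]_n) : adj M = M -> M \is normalmx.
Proof. by move=> H; apply/normalmxP; rewrite -hadjE H. Qed.

Lemma gmapGfE f n (d : 'rV[C]_n) : gmap (Gf f) d =
   \row_i (if d 0 i == 0 then 0 else ((f (complex.Re (d 0 i)))%:C)%C).
Proof. by []. Qed.

Lemma mxfun_unfold n f (M : 'M[C]_n) : mxfun f M =
  invmx (spectralmx M) *m diag_mx (gmap (Gf f) (spectral_diag M)) *m spectralmx M.
Proof. by rewrite gmapGfE. Qed.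

Lemma mxfunE n f (M : 'M[C]_n) V d : eigdec M V d ->
  mxfun f M = adj V *m diag_mx (gmap (Gf f) d) *m V.
Proof.
move=> H; have HS := spec_eigdec (eigdec_normal H).
have E := eigdec_uniq (Gf f) HS H.
rewrite mxfun_unfold (invmx_unitary (spectral_unitarymx M)) -hadjE.
exact: E.
Qed.

End Q2.

Section Q3.
Variable R : realType.
Local Notation C := R[i].

Definition rowC n (l : 'I_n -> R) : 'rV[C]_n := \row_i ((l i)%:C)%C.

Definition psddec n (M V : 'M[C]_n) (l : 'I_n -> R) :=
  eigdec M V (rowC l) /\ forall i, 0 <= l i.

Lemma diag_mxZ' n (c : C) (d : 'rV[C]_n) : diag_mx (c *: d) = c *: diag_mx d.
Proof. by apply/matrixP=> i j; rewrite !mxE mulrnAr. Qed.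

Lemma diag_mxM' n (d e : 'rV[C]_n) :
  diag_mx d *m diag_mx e = diag_mx (\row_j (d 0 j * e 0 j)).
Proof. exact: mulmx_diag. Qed.

Lemma cdecM n (V : 'M[C]_n) (d e : 'rV[C]_n) : V *m adj V = 1%:M ->
  (adj V *m diag_mx d *m V) *m (adj V *m diag_mx e *m V) =
  adj V *m diag_mx (\row_j (d 0 j * e 0 j)) *m V.
Proof.
move=> HV; transitivity (adj V *m diag_mx d *m (V *m adj V) *m diag_mx e *m V).
  by rewrite !mulmxA.
by rewrite HV mulmx1 -diag_mxM' !mulmxA.
Qed.

Lemma realC_eq0 (r : R) : (((r%:C)%C : C) == 0) = (r == 0).
Proof. by rewrite -(inj_eq (@complexI R)). Qed.

Lemma Gf_pow (r p : R) : 0 <= r -> p != 0 ->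
  Gf (fun x => powR x p) ((r%:C)%C) = ((powR r p)%:C)%C.
Proof.
move=> r0 p0; rewrite /Gf realC_eq0; case: eqP => [->|_]; first by rewrite powR0.
by [].
Qed.

Lemma mxpowE n (M V : 'M[C]_n) l p : psddec M V l -> p != 0 ->
  mxpow M p = adj V *m diag_mx (rowC (fun i => powR (l i) p)) *m V.
Proof.
move=> [H l0] p0; rewrite /mxpow (mxfunE _ H); congr (_ *m diag_mx _ *m _).
by apply/rowP=> i; rewrite !mxE Gf_pow.
Qed.

Lemma psddec_pow n (M V : 'M[C]_n) l p : psddec M V l -> p != 0 ->
  psddec (mxpow M p) V (fun i => powR (l i) p).
Proof.
move=> H p0; split; last by move=> i; apply: powR_ge0.
by split; [exact: H.1.1 | exact: mxpowE].
Qed.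

Lemma ge0_ReC (z : C) : 0 <= z -> ((complex.Re z)%:C)%C = z /\ 0 <= complex.Re z.
Proof.
case: z => a b; rewrite lecE /= => /andP[/eqP b0 a0]; split => //.
rewrite b0. apply/eqP; rewrite eq_complex /= !eqxx. by [].
Qed.

Lemma psd_eig_ge0 n (M V : 'M[C]_n) d i : psd M -> eigdec M V d -> 0 <= d 0 i.
Proof.
move=> [_ Hq] [HV EV].
have := Hq (adj V *m delta_mx i 0).
rewrite hadj_mul hadjK EV !mulmxA.
rewrite -[_ *m V *m adj V]mulmxA HV mulmx1 -[_ *m V *m adj V]mulmxA HV mulmx1.
have -> : adj (delta_mx i 0 : 'cV[C]_n) = delta_mx 0 i.
  by apply/matrixP=> u v; rewrite !mxE [in RHS]andbC conjC_nat.
rewrite -mulmxA mul_diag_mx mxE (bigD1 i) //= big1 ?addr0.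
  by rewrite !mxE !eqxx mulr1 mul1r.
by move=> j ji; rewrite !mxE (negbTE ji) /= mul0r.
Qed.

Lemma psd_psddec n (M : 'M[C]_n) : psd M -> exists V l, psddec M V l.
Proof.
move=> Hp; have Mn := herm_normal Hp.1.
have H := spec_eigdec Mn.
exists (spectralmx M), (fun i => complex.Re (spectral_diag M 0 i)); split.
  have -> : rowC (fun i => complex.Re (spectral_diag M 0 i)) = spectral_diag M.
    by apply/rowP=> i; rewrite !mxE; case: (ge0_ReC (psd_eig_ge0 i Hp H)).
  exact: H.
by move=> i; case: (ge0_ReC (psd_eig_ge0 i Hp H)).
Qed.

Lemma psddec_herm n (M V : 'M[C]_n) l : psddec M V l -> adj M = M.
Proof.
move=> [[HV EV] _]; rewrite EV !hadj_mul hadjK hadj_diag mulmxA; congr (_ *m diag_mx _ *m _).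
by apply/rowP=> i; rewrite !mxE; apply: conj_Creal; apply/complex_realP; exists (l i).
Qed.

Lemma tr_eigdec n (M V : 'M[C]_n) d : eigdec M V d -> \tr M = \sum_i d 0 i.
Proof.
by move=> [HV ->]; rewrite mxtrace_mulC mulmxA HV mul1mx mxtrace_diag.
Qed.

Lemma psddec_scale n (M V : 'M[C]_n) l c : psddec M V l -> 0 <= c ->
  psddec ((c%:C)%C *: M) V (fun i => c * l i).
Proof.
move=> [[HV EV] l0] c0; split; last by move=> i; rewrite mulr_ge0.
split=> //; rewrite EV scalemxAl scalemxAr -diag_mxZ'; congr (_ *m diag_mx _ *m _).
by apply/rowP=> i; rewrite !mxE rmorphM.
Qed.

Lemma mxpow_scale n (M V : 'M[C]_n) l c p : psddec M V l -> 0 <= c -> p != 0 ->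
  mxpow ((c%:C)%C *: M) p = ((powR c p)%:C)%C *: mxpow M p.
Proof.
move=> H c0 p0; rewrite (mxpowE (psddec_scale H c0) p0) (mxpowE H p0).
rewrite scalemxAl scalemxAr -diag_mxZ'; congr (_ *m diag_mx _ *m _).
by apply/rowP=> i; rewrite !mxE powRM // ?H.2 // rmorphM.
Qed.

Lemma mxpow_sandwich n (M V : 'M[C]_n) l q : psddec M V l -> q != 0 ->
  q + 1 + q != 0 ->
  mxpow M q *m M *m mxpow M q = mxpow M (q + 1 + q).
Proof.
move=> H q0 q1; rewrite (mxpowE H q0) (mxpowE H q1) {1}H.1.2.
rewrite (cdecM _ _ H.1.1) (cdecM _ _ H.1.1); congr (_ *m diag_mx _ *m _).
apply/rowP=> i; rewrite !mxE -!rmorphM; congr ((_)%:C)%C.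
have [->|li] := eqVneq (l i) 0; first by rewrite mulr0 mul0r powR0.
rewrite powRD; last by rewrite li implybT.
by rewrite powRD ?li ?implybT // powRr1 ?H.2.
Qed.

Lemma mxpow_comp n (M V : 'M[C]_n) l p q : psddec M V l -> p != 0 -> q != 0 ->
  mxpow (mxpow M p) q = mxpow M (p * q).
Proof.
move=> H p0 q0; rewrite (mxpowE (psddec_pow H p0) q0) (mxpowE H) ?mulf_neq0 //.
by congr (_ *m diag_mx _ *m _); apply/rowP=> i; rewrite !mxE powRrM.
Qed.

Lemma mxpow_proj n (P V : 'M[C]_n) l p : psddec P V l -> P *m P = P -> p != 0 ->
  mxpow P p = P.
Proof.
move=> H PP p0; rewrite (mxpowE H p0) {1}H.1.2; congr (_ *m diag_mx _ *m _).
have E : diag_mx (\row_j (rowC l 0 j * rowC l 0 j)) = diag_mx (rowC l).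
  have := PP; rewrite {1 2 3}H.1.2 (cdecM _ _ H.1.1) => E0.
  have F : forall d, V *m (adj V *m diag_mx d *m V) *m adj V = diag_mx d.
    by move=> d; rewrite !mulmxA H.1.1 mul1mx -mulmxA H.1.1 mulmx1.
  by rewrite -F E0 F.
apply/rowP=> i; have /matrixP/(_ i i) := E; rewrite !mxE !eqxx !mulr1n.
rewrite -rmorphM => /complexI E2.
have : l i * (l i - 1) = 0 by rewrite mulrBr mulr1 E2 subrr.
move/eqP; rewrite mulf_eq0 subr_eq0 => /orP[]/eqP->; first by rewrite powR0.
by rewrite powR1.
Qed.

End Q3.

Section Q4.
Variable R : realType.
Local Notation C := R[i].
Local Notation tidx i j := (mxtens_index (i, j)).
Local Notation ui u := (mxtens_unindex u).

Definition blk m k (F : 'I_k -> 'M[C]_m) : 'M[C]_(m * k) :=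
  \matrix_(u, v) (((ui u).2 == (ui v).2)%:R * F (ui u).2 (ui u).1 (ui v).1).

Lemma blkE m k (F : 'I_k -> 'M[C]_m) i x j y :
  blk F (tidx i x) (tidx j y) = (x == y)%:R * F x i j.
Proof. by rewrite mxE !mxtens_indexK. Qed.

Lemma sum_tidx m k (G : 'I_(m * k) -> C) :
  \sum_u G u = \sum_i \sum_x G (tidx i x).
Proof.
symmetry; rewrite pair_big /= [RHS](reindex (@mxtens_index m k)) /=.
  by apply: eq_bigr => -[i x] _.
by exists (@mxtens_unindex m k) => u _; [apply: mxtens_indexK|apply: mxtens_unindexK].
Qed.

Lemma mx_tidxP m k m' k' (A B : 'M[C]_(m * k, m' * k')) :
  (forall i x j y, A (tidx i x) (tidx j y) = B (tidx i x) (tidx j y)) -> A = B.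
Proof.
move=> H; apply/matrixP=> u v.
by rewrite -(mxtens_unindexK u) -(mxtens_unindexK v); case: (ui u); case: (ui v) => ? ? ? ?.
Qed.

Lemma sum_delta k (x : 'I_k) (f : 'I_k -> C) : \sum_z ((x == z)%:R * f z) = f x.
Proof.
rewrite (bigD1 x) //= eqxx mul1r big1 ?addr0 // => z zx.
by rewrite eq_sym (negbTE zx) mul0r.
Qed.

Lemma sum_delta' k (x : 'I_k) (f : 'I_k -> C) : \sum_z ((z == x)%:R * f z) = f x.
Proof. by rewrite -(sum_delta x); apply: eq_bigr => z _; rewrite eq_sym. Qed.

Lemma blk_mul m k (F G : 'I_k -> 'M[C]_m) :
  blk F *m blk G = blk (fun x => F x *m G x).
Proof.
apply: mx_tidxP => i x j y; rewrite blkE !mxE sum_tidx.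
rewrite (eq_bigr (fun l => (x == y)%:R * (F x i l * G x l j))).
  by rewrite -mulr_sumr.
move=> l _; rewrite (eq_bigr (fun z => (x == z)%:R * ((z == y)%:R * (F x i l * G z l j)))).
  rewrite sum_delta; case: eqP => [->|_]; by rewrite ?mul0r ?mul1r.
move=> z _; rewrite !blkE; case: eqP => [<-|_]; rewrite ?mul0r //.
by rewrite !mul1r mulrCA.
Qed.

Lemma hadj_blk m k (F : 'I_k -> 'M[C]_m) :
  adj (blk F) = blk (fun x => adj (F x)).
Proof.
apply: mx_tidxP => i x j y; rewrite mxE !blkE mxE cjM conjC_nat eq_sym.
by case: eqP => [->|_]; rewrite ?mul0r ?mul1r.
Qed.

Lemma blk_diag m k (d : 'I_k -> 'rV[C]_m) :
  blk (fun x => diag_mx (d x)) = diag_mx (\row_u d (ui u).2 0 (ui u).1).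
Proof.
apply: mx_tidxP => i x j y; rewrite blkE !mxE !mxtens_indexK /=.
rewrite (inj_eq (can_inj (@mxtens_indexK m k))) xpair_eqE.
by case: (x == y); case: (i == j); rewrite ?mul0r ?mul1r ?andbF.
Qed.

Lemma blk1 m k : blk (fun _ : 'I_k => (1%:M : 'M[C]_m)) = 1%:M.
Proof.
apply: mx_tidxP => i x j y; rewrite blkE !mxE.
rewrite (inj_eq (can_inj (@mxtens_indexK m k))) xpair_eqE.
by case: (x == y); case: (i == j); rewrite ?mul0r ?mul1r ?andbF.
Qed.

Lemma trace_blk m k (F : 'I_k -> 'M[C]_m) : \tr (blk F) = \sum_x \tr (F x).
Proof.
rewrite /mxtrace sum_tidx exchange_big /=; apply: eq_bigr => x _.
by apply: eq_bigr => i _; rewrite blkE eqxx mul1r.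
Qed.

Definition rowblk m k (d : 'I_k -> 'rV[C]_m) : 'rV[C]_(m * k) :=
  \row_u d (ui u).2 0 (ui u).1.

Lemma eigdec_blk m k (F V : 'I_k -> 'M[C]_m) d :
  (forall x, eigdec (F x) (V x) (d x)) -> eigdec (blk F) (blk V) (rowblk d).
Proof.
move=> H; split.
  by rewrite hadj_blk blk_mul -blk1; congr blk; apply: funext => x; case: (H x).
rewrite hadj_blk /rowblk -blk_diag !blk_mul.
by congr blk; apply: funext => x; case: (H x).
Qed.

Lemma mxfun_blk f m k (F : 'I_k -> 'M[C]_m) :
  (forall x, adj (F x) = F x) -> mxfun f (blk F) = blk (fun x => mxfun f (F x)).
Proof.
move=> H.
have E x : eigdec (F x) (spectralmx (F x)) (spectral_diag (F x)).
  exact/spec_eigdec/herm_normal.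
rewrite (mxfunE _ (eigdec_blk E)).
transitivity (blk (fun x => adj (spectralmx (F x)) *m
     diag_mx (gmap (Gf f) (spectral_diag (F x))) *m spectralmx (F x))).
  rewrite -blk_mul -blk_mul -hadj_blk blk_diag; congr (_ *m diag_mx _ *m _).
  by apply/rowP=> u; rewrite !mxE.
by congr blk; apply: funext => x; rewrite (mxfunE _ (E x)).
Qed.

Lemma blk_ext m k (F G : 'I_k -> 'M[C]_m) : (forall x, F x = G x) -> blk F = blk G.
Proof. by move=> H; congr blk; apply: funext. Qed.

End Q4.

Section Q5.
Variable R : realType.
Local Notation C := R[i].
Local Notation tidx i j := (mxtens_index (i, j)).
Local Notation ui u := (mxtens_unindex u).

Lemma mx_tidx3P a b k a' b' k' (A B : 'M[C]_(a * b * k, a' * b' * k')) :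
  (forall i j x i' j' x', A (tidx (tidx i j) x) (tidx (tidx i' j') x') =
                          B (tidx (tidx i j) x) (tidx (tidx i' j') x')) -> A = B.
Proof.
move=> H; apply: mx_tidxP => w x w' x'.
by rewrite -(mxtens_unindexK w) -(mxtens_unindexK w'); case: (ui w); case: (ui w') => ? ? ? ?.
Qed.

Lemma ptr2_blk m k (F : 'I_k -> 'M[C]_m) : ptr2 (blk F) = \sum_x F x.
Proof.
apply/matrixP=> i j; rewrite !mxE summxE; apply: eq_bigr => x _.
by rewrite blkE eqxx mul1r.
Qed.

Lemma ptr1_blk m k (F : 'I_k -> 'M[C]_m) : ptr1 (blk F) = diag_mx (\row_x \tr (F x)).
Proof.
apply/matrixP=> x y; rewrite !mxE.
under eq_bigr do rewrite blkE.
by rewrite -mulr_sumr mulr_natl eq_sym.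
Qed.

Lemma ptr_mid_blk a b k (F : 'I_k -> 'M[C]_(a * b)) :
  ptr_mid (blk F) = blk (fun x => ptr2 (F x)).
Proof.
apply: mx_tidxP => i x j y; rewrite blkE !mxE !mxtens_indexK /=.
under eq_bigr do rewrite blkE.
by rewrite -mulr_sumr.
Qed.

Lemma ptr_first_blk a b k (F : 'I_k -> 'M[C]_(a * b)) :
  ptr_first (blk F) = blk (fun x => ptr1 (F x)).
Proof.
apply: mx_tidxP => i x j y; rewrite blkE !mxE !mxtens_indexK /=.
under eq_bigr do rewrite blkE.
by rewrite -mulr_sumr.
Qed.

Lemma ext_mid_blk a b k (G : 'I_k -> 'M[C]_a) :
  ext_mid b (blk G) = blk (fun x => G x *t (1%:M : 'M[C]_b)).
Proof.
apply: mx_tidx3P => i j x i2 j2 x2; by rewrite !mxE !mxtens_indexK /= mulrA.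
Qed.

Lemma tens1_diag b k (d : 'rV[C]_k) :
  (1%:M : 'M[C]_b) *t diag_mx d = blk (fun x => d 0 x *: 1%:M).
Proof.
apply: mx_tidxP => j x j' x'; rewrite tensmxE blkE !mxE.
case: (x =P x') => [->|_]; case: (j == j'); by rewrite ?mulr0n ?mulr1n ?mulr0 ?mul0r ?mulr1 ?mul1r.
Qed.

Lemma cq_blk a b k (p : 'I_k -> R) (psi : 'I_k -> 'cV[C]_(a * b)) :
  cq_state p psi = blk (fun x => ((p x)%:C)%C *: proj (psi x)).
Proof.
apply: mx_tidxP => w y w' y'; rewrite blkE summxE.
rewrite (bigD1 y) //= big1 ?addr0.
  rewrite mxE tensmxE [delta_mx _ _ _ _]mxE eqxx /=. rewrite [in RHS]mxE.
  by rewrite eq_sym mulrCA mulrA mulr_natr mulr_natl mulrC.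
by move=> x xy; rewrite mxE tensmxE [delta_mx _ _ _ _]mxE eq_sym (negbTE xy) /= !mulr0.
Qed.

End Q5.

Section Q6.
Variable R : realType.
Local Notation C := R[i].
Local Notation tidx i j := (mxtens_index (i, j)).
Local Notation ui u := (mxtens_unindex u).

Lemma gram_psd m n (X : 'M[C]_(m, n)) : psd (X *m adj X).
Proof.
split; first by rewrite hadj_mul hadjK.
move=> v.
have -> : adj v *m (X *m adj X) *m v = adj (adj X *m v) *m (adj X *m v).
  by rewrite hadj_mul hadjK !mulmxA.
rewrite mxE.
apply: sumr_ge0 => i _; rewrite mxE mulrC; exact: mul_conjC_ge0.
Qed.

Lemma psd_herm n (M : 'M[C]_n) : psd M -> adj M = M.
Proof. by case. Qed.

Lemma tr_eigmxfun n (M V : 'M[C]_n) d f : eigdec M V d ->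
  \tr (mxfun f M) = \sum_i Gf f (d 0 i).
Proof.
move=> H; rewrite (mxfunE _ H) mxtrace_mulC mulmxA H.1 mul1mx mxtrace_diag.
by apply: eq_bigr => i _; rewrite mxE.
Qed.

Lemma eigdec_tr n (M V : 'M[C]_n) d : eigdec M V d -> eigdec (M^T) ((adj V)^T) d.
Proof.
move=> [HV EV].
have aU : adj ((adj V)^T) = V^T by apply/matrixP=> i j; rewrite !mxE conjCK.
split; first by rewrite aU -trmx_mul HV trmx1.
by rewrite aU EV !trmx_mul tr_diag_mx mulmxA.
Qed.

Lemma tr_mxfun_trmx n (M : 'M[C]_n) f : M \is normalmx ->
  \tr (mxfun f (M^T)) = \tr (mxfun f M).
Proof.
move=> Mn; have H := spec_eigdec Mn.
by rewrite (tr_eigmxfun _ (eigdec_tr H)) (tr_eigmxfun _ H).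
Qed.

Lemma gram_swap m n (Y : 'M[C]_(m, n)) f :
  \tr (mxfun f (Y *m adj Y)) = \tr (mxfun f (adj Y *m Y)).
Proof.
have H1 := spec_eigdec (herm_normal (psd_herm (gram_psd Y))).
have H2 : eigdec (adj Y *m Y) (spectralmx (adj Y *m Y)) (spectral_diag (adj Y *m Y)).
  by apply/spec_eigdec/herm_normal; rewrite hadj_mul hadjK.
rewrite (tr_eigmxfun _ H1) (tr_eigmxfun _ H2).
set U := spectralmx _ in H1 *; set d := spectral_diag _ in H1 *.
set V := spectralmx _ in H2 *; set e := spectral_diag _ in H2 *.
case: H1 => HU EU; case: H2 => HV EV.
have HU' := mulmx1C HU; have HV' := mulmx1C HV.
set Q := U *m Y *m adj V.
have QQ : Q *m adj Q = diag_mx d.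
  rewrite /Q !hadj_mul !hadjK !mulmxA -[U *m Y *m adj V *m V]mulmxA HV' mulmx1.
  by rewrite -[U *m Y *m adj Y]mulmxA EU !mulmxA HU mul1mx -mulmxA HU mulmx1.
have QQ' : adj Q *m Q = diag_mx e.
  rewrite /Q !hadj_mul !hadjK !mulmxA -[V *m adj Y *m adj U *m U]mulmxA HU' mulmx1.
  by rewrite -[V *m adj Y *m Y]mulmxA EV !mulmxA HV mul1mx -mulmxA HV mulmx1.
have DQ : diag_mx d *m Q = Q *m diag_mx e.
  by rewrite -QQ -QQ'; apply: esym; apply: mulmxA.
clearbody Q.
have Ede i j : Q i j != 0 -> d 0 i = e 0 j.
  move=> nz; move/matrixP: DQ => /(_ i j); rewrite mul_diag_mx mul_mx_diag !mxE.
  by move=> E; apply: (mulIf nz); rewrite E mulrC.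
have dE i : d 0 i = \sum_j Q i j * (Q i j)^*.
  move/matrixP: QQ => /(_ i i); rewrite !mxE eqxx mulr1n => <-.
  by apply: eq_bigr => j _; rewrite mxE.
have eE j : e 0 j = \sum_i Q i j * (Q i j)^*.
  move/matrixP: QQ' => /(_ j j); rewrite !mxE eqxx mulr1n => <-.
  by apply: eq_bigr => i _; rewrite mxE mulrC.
pose h z := Gf f z / z.
have gh z : Gf f z = h z * z.
  rewrite /h; have [->|nz] := eqVneq z 0; first by rewrite /Gf eqxx mulr0.
  by rewrite divfK.
transitivity (\sum_i \sum_j h (d 0 i) * (Q i j * (Q i j)^*)).
  by apply: eq_bigr => i _; rewrite gh dE mulr_sumr.
rewrite exchange_big /=; apply: eq_bigr => j _.
rewrite gh; set t := h _; rewrite eE mulr_sumr; apply: eq_bigr => i _.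
have [->|nz] := eqVneq (Q i j) 0; first by rewrite !mul0r !mulr0.
by rewrite (Ede _ _ nz).
Qed.

Definition mxW a b (w : 'cV[C]_(a * b)) : 'M[C]_(a, b) := \matrix_(i, j) w (tidx i j) 0.

Lemma ptr2_proj a b (w : 'cV[C]_(a * b)) : ptr2 (proj w) = mxW w *m adj (mxW w).
Proof.
apply/matrixP=> i i'; rewrite !mxE; apply: eq_bigr => j _.
by rewrite !mxE big_ord1 !mxE.
Qed.

Lemma ptr1_proj a b (w : 'cV[C]_(a * b)) :
  ptr1 (proj w) = (mxW w)^T *m adj ((mxW w)^T).
Proof.
apply/matrixP=> j j'; rewrite !mxE; apply: eq_bigr => i _.
by rewrite !mxE big_ord1 !mxE.
Qed.

Lemma tr_ptr_swap a b (w : 'cV[C]_(a * b)) f :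
  \tr (mxfun f (ptr1 (proj w))) = \tr (mxfun f (ptr2 (proj w))).
Proof.
rewrite ptr1_proj gram_swap ptr2_proj -tr_mxfun_trmx.
  congr (\tr (mxfun f _)); apply/matrixP=> i i'; rewrite !mxE.
  by apply: eq_bigr => j _; rewrite !mxE mulrC.
apply: herm_normal; apply: psd_herm.
by have := gram_psd (adj ((mxW w)^T)); rewrite hadjK.
Qed.

Lemma hadj_tens m n p q (A : 'M[C]_(m, n)) (B : 'M[C]_(p, q)) :
  adj (A *t B) = adj A *t adj B.
Proof. by apply: mx_tidxP => i x j y; rewrite mxE !tensmxE !mxE cjM. Qed.

Lemma mxW_tens a b (A : 'M[C]_a) (v : 'cV[C]_(a * b)) :
  mxW ((A *t (1%:M : 'M[C]_b)) *m v) = A *m mxW v.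
Proof.
apply/matrixP=> i j; rewrite !mxE sum_tidx; apply: eq_bigr => i' _.
rewrite (bigD1 j) //= big1 ?addr0.
  by rewrite tensmxE !mxE eqxx mulr1.
by move=> j' jj; rewrite tensmxE !mxE eq_sym (negbTE jj) mulr0 mul0r.
Qed.

Lemma proj_tens a b (A : 'M[C]_a) (v : 'cV[C]_(a * b)) : adj A = A ->
  (A *t (1%:M : 'M[C]_b)) *m proj v *m (A *t (1%:M : 'M[C]_b)) =
  proj ((A *t (1%:M : 'M[C]_b)) *m v).
Proof.
move=> hA; rewrite /proj hadj_mul hadj_tens hA hadj1 !mulmxA.
by [].
Qed.

Lemma tr_proj a (v : 'cV[C]_a) : \tr (proj v) = (adj v *m v) 0 0.
Proof. by rewrite /proj mxtrace_mulC /mxtrace big_ord1. Qed.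

End Q6.

Section Q7.
Variable R : realType.
Local Notation C := R[i].
Local Notation tidx i j := (mxtens_index (i, j)).

Lemma tensZl m n p q (c : C) (A : 'M[C]_(m, n)) (B : 'M[C]_(p, q)) :
  (c *: A) *t B = c *: (A *t B).
Proof. by apply: mx_tidxP => i x j y; rewrite !mxE !mxtens_indexK mulrA. Qed.

Lemma ptr2Z m n (c : C) (M : 'M[C]_(m * n)) : ptr2 (c *: M) = c *: ptr2 M.
Proof.
apply/matrixP=> i j; rewrite !mxE mulr_sumr; apply: eq_bigr => y _; by rewrite mxE.
Qed.

Lemma ptr1Z m n (c : C) (M : 'M[C]_(m * n)) : ptr1 (c *: M) = c *: ptr1 M.
Proof.
apply/matrixP=> i j; rewrite !mxE mulr_sumr; apply: eq_bigr => y _; by rewrite mxE.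
Qed.

Lemma tr_ptr2 m n (M : 'M[C]_(m * n)) : \tr (ptr2 M) = \tr M.
Proof.
rewrite /mxtrace sum_tidx; apply: eq_bigr => i _; by rewrite mxE.
Qed.

Lemma conj_realC (r : R) : ((r%:C)%C : C)^* = (r%:C)%C.
Proof. by apply: conj_Creal; apply/complex_realP; exists r. Qed.

Lemma herm_scale n (c : R) (M : 'M[C]_n) : adj M = M ->
  adj (((c%:C)%C : C) *: M) = (c%:C)%C *: M.
Proof. by move=> H; rewrite hadjZ H conj_realC. Qed.

Lemma mxpow_blk_scale m k (c : 'I_k -> R) (M : 'I_k -> 'M[C]_m) q :
  (forall x, psd (M x)) -> (forall x, 0 <= c x) -> q != 0 ->
  mxpow (blk (fun x => ((c x)%:C)%C *: M x)) q =
  blk (fun x => ((powR (c x) q)%:C)%C *: mxpow (M x) q).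
Proof.
move=> Hp Hc q0; rewrite /mxpow mxfun_blk.
  apply: blk_ext => x; have [V [l H]] := psd_psddec (Hp x).
  by have := mxpow_scale H (Hc x) q0; rewrite /mxpow.
by move=> x; apply: herm_scale; case: (Hp x).
Qed.

Lemma eigdec1 n (d : 'rV[C]_n) : eigdec (diag_mx d) 1%:M d.
Proof. by split; rewrite hadj1 ?mulmx1 ?mul1mx. Qed.

Lemma mxpow_diag n (q : 'I_n -> R) s : (forall i, 0 <= q i) -> s != 0 ->
  mxpow (diag_mx (rowC q)) s = diag_mx (rowC (fun i => powR (q i) s)).
Proof.
move=> q0 s0; rewrite (@mxpowE _ _ _ 1%:M q) //; last by split => //; apply: eigdec1.
by rewrite hadj1 mulmx1 mul1mx.
Qed.

Lemma psd_proj n (v : 'cV[C]_n) : psd (proj v).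
Proof. exact: gram_psd. Qed.

Lemma proj_idem n (v : 'cV[C]_n) : (adj v *m v) 0 0 = 1 -> proj v *m proj v = proj v.
Proof.
move=> H; have E : adj v *m v = 1%:M.
  by apply/matrixP=> i j; rewrite !ord1 H mxE.
by rewrite /proj mulmxA -[v *m adj v *m v]mulmxA E mulmx1.
Qed.

Lemma psddec_pos_tr n (M V : 'M[C]_n) l : psddec M V l -> \tr M = 1 ->
  exists i, 0 < l i.
Proof.
move=> H t1; have := tr_eigdec H.1; rewrite t1.
move=> E; have [i Hi|Hn] := pickP (fun i => 0 < l i); first by exists i.
exfalso; move: E; rewrite big1; first by move/eqP; rewrite oner_eq0.
move=> i _; rewrite mxE; have := Hn i; have := H.2 i.
by rewrite le_eqVlt => /orP[/eqP<-|->].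
Qed.

End Q7.

Section Q8.
Variable R : realType.
Local Notation C := R[i].

Lemma sc_mul3 m (c1 c2 c3 : C) (X Y Z : 'M[C]_m) :
  (c1 *: X) *m (c2 *: Y) *m (c3 *: Z) = (c1 * c2 * c3) *: (X *m Y *m Z).
Proof.
by rewrite -!scalemxAl -!scalemxAr -!scalemxAl !scalerA [c3 * c2]mulrC mulrA.
Qed.

Lemma blk_mul3 m k (F G H : 'I_k -> 'M[C]_m) :
  blk F *m blk G *m blk H = blk (fun x => F x *m G x *m H x).
Proof. by rewrite !blk_mul. Qed.

Lemma sc_pow3 (c g s : R) : 0 <= c -> g + s + g = 1 -> s != 0 ->
  powR c g * powR c s * powR c g = c.
Proof.
move=> c0 E s0; have [->|cn] := eqVneq c 0; first by rewrite (powR0 s0) mulr0 mul0r.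
by rewrite -!powRD ?cn ?implybT // E powRr1.
Qed.

Lemma sc_pow3' (c d : R) : 0 <= c -> d + 1 + d != 0 ->
  powR c d * c * powR c d = powR c (d + 1 + d).
Proof.
move=> c0 E; have [->|cn] := eqVneq c 0; first by rewrite (powR0 E) mulr0 mul0r.
by rewrite -{2}(powRr1 c0) -!powRD ?cn ?implybT.
Qed.

Lemma realCM (x y : R) : (((x * y)%:C)%C : C) = (x%:C)%C * (y%:C)%C.
Proof. exact: rmorphM. Qed.

Lemma realC_sum I (r : seq I) (F : I -> R) :
  ((\sum_(i <- r) F i)%:C)%C = \sum_(i <- r) ((F i)%:C)%C :> C.
Proof. exact: rmorph_sum. Qed.

End Q8.

Section Ens.
Variable R : realType.
Local Notation C := R[i].
Variables (a b k : nat) (p : 'I_k -> R) (psi : 'I_k -> 'cV[C]_(a * b)) (alpha : R).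
Hypotheses (p0 : forall x, 0 <= p x) (hn : forall x, (adj (psi x) *m psi x) 0 0 = 1)
  (al0 : 0 < alpha) (al2 : alpha < 2) (al1 : alpha != 1).

Definition PA x := ptr2 (proj (psi x)).
Definition bet := (2 - alpha) / alpha.
Definition TT x := complex.Re (\tr (mxpow (PA x) bet)).

Lemma bet_neq0 : bet != 0.
Proof. by rewrite /bet mulf_neq0 ?invr_eq0 ?subr_eq0 ?gt_eqF // lt_eqF. Qed.

Lemma PA_psd x : psd (PA x).
Proof. rewrite /PA ptr2_proj; exact: gram_psd. Qed.

Lemma PA_tr x : \tr (PA x) = 1.
Proof. by rewrite /PA tr_ptr2 tr_proj hn. Qed.

Lemma TT_prop x : \tr (mxpow (PA x) bet) = ((TT x)%:C)%C /\ 0 < TT x.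
Proof.
have [V [l H]] := psd_psddec (PA_psd x).
have [i Hi] := psddec_pos_tr H (PA_tr x).
have E : \tr (mxpow (PA x) bet) = ((\sum_j powR (l j) bet)%:C)%C.
  rewrite (tr_eigdec (psddec_pow H bet_neq0).1) realC_sum.
  by apply: eq_bigr => j _; rewrite mxE.
rewrite /TT E /=; split => //.
apply: (lt_le_trans (powR_gt0 bet Hi)).
by rewrite (bigD1 i) //= lerDl sumr_ge0 // => j _; apply: powR_ge0.
Qed.

End Ens.

Section Ens2.
Variable R : realType.
Local Notation C := R[i].
Variables (a b k : nat) (p : 'I_k -> R) (psi : 'I_k -> 'cV[C]_(a * b)) (alpha : R).
Hypotheses (p0 : forall x, 0 <= p x) (hn : forall x, (adj (psi x) *m psi x) 0 0 = 1)
  (al0 : 0 < alpha) (al2 : alpha < 2) (al1 : alpha != 1).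

Local Notation g := ((1 - alpha) / 2).
Local Notation d := ((alpha - 1) / 2).
Let sig := cq_state p psi.

Lemma g_neq0 : g != 0.
Proof. apply/eqP => E; move/eqP: al1; apply; lra. Qed.
Lemma g3 : g + alpha + g = 1. Proof. lra. Qed.
Lemma g3' : g + 1 + g != 0. Proof. apply/eqP => E; have h := al2; lra. Qed.
Lemma d3 : d + 1 + d = alpha. Proof. lra. Qed.
Lemma al_neq0 : alpha != 0. Proof. by rewrite gt_eqF. Qed.
Lemma ial_neq0 : 1 / alpha != 0. Proof. by rewrite mul1r invr_eq0 al_neq0. Qed.
Lemma gbet : (g + 1 + g) * (1 / alpha) = bet alpha.
Proof. rewrite /bet; field; exact: al_neq0. Qed.
Lemma aia : alpha * (1 / alpha) = 1.
Proof. by rewrite mul1r mulfV // al_neq0. Qed.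

Let A x := mxpow (PA psi x) g.
Let w x := (A x *t (1%:M : 'M[C]_b)) *m psi x.

Lemma A_herm x : adj (A x) = A x.
Proof.
have [V [l H]] := psd_psddec (@PA_psd _ _ _ _ psi x).
exact: (psddec_herm (psddec_pow H g_neq0)).
Qed.

Lemma trNx x : \tr (mxpow (ptr1 (proj (w x))) (1 / alpha)) = ((TT psi alpha x)%:C)%C.
Proof.
rewrite /mxpow tr_ptr_swap -/(mxpow _ _) ptr2_proj mxW_tens hadj_mul !mulmxA.
have [V [l H]] := psd_psddec (@PA_psd _ _ _ _ psi x).
rewrite -[_ *m adj (mxW (psi x))]mulmxA -ptr2_proj -/(PA psi x) A_herm.
rewrite /A (mxpow_sandwich H g_neq0 g3') (mxpow_comp H g3' ial_neq0) gbet.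
by case: (TT_prop hn al0 al2 x).
Qed.

Lemma cmi_tr :
  \tr (mxpow ((1%:M : 'M[C]_b) *t mxpow (ptr1 sig) ((alpha - 1) / 2) *m
         ptr_first (ext_mid b (mxpow (ptr_mid sig) ((1 - alpha) / 2)) *m
                    mxpow sig alpha *m ext_mid b (mxpow (ptr_mid sig) ((1 - alpha) / 2))) *m
         ((1%:M : 'M[C]_b) *t mxpow (ptr1 sig) ((alpha - 1) / 2))) (1 / alpha))
  = ((\sum_x p x * TT psi alpha x)%:C)%C.
Proof.
have E1 : ptr1 sig = diag_mx (rowC p).
  rewrite /sig cq_blk ptr1_blk; congr diag_mx; apply/rowP=> x; rewrite !mxE mxtraceZ.
  by rewrite tr_proj hn mulr1.
have E2 : ptr_mid sig = blk (fun x => ((p x)%:C)%C *: PA psi x).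
  by rewrite /sig cq_blk ptr_mid_blk; apply: blk_ext => x; rewrite ptr2Z.
have E3 : mxpow sig alpha = blk (fun x => ((powR (p x) alpha)%:C)%C *: proj (psi x)).
  rewrite /sig cq_blk mxpow_blk_scale //; last by rewrite al_neq0.
    apply: blk_ext => x; have [V [l H]] := psd_psddec (psd_proj (psi x)).
    by rewrite (mxpow_proj H (proj_idem (hn x)) al_neq0).
  by move=> x; apply: psd_proj.
have E4 : mxpow (ptr_mid sig) ((1 - alpha) / 2) =
          blk (fun x => ((powR (p x) g)%:C)%C *: A x).
  by rewrite E2 mxpow_blk_scale //; [move=> x; apply: (@PA_psd _ _ _ _ psi x) | exact: g_neq0].
have E5 : ext_mid b (blk (fun x => ((powR (p x) g)%:C)%C *: A x)) =
          blk (fun x => ((powR (p x) g)%:C)%C *: (A x *t (1%:M : 'M[C]_b))).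
  by rewrite ext_mid_blk; apply: blk_ext => x; rewrite tensZl.
have E6 : ptr_first (blk (fun x => ((powR (p x) g)%:C)%C *: (A x *t (1%:M : 'M[C]_b))) *m
            blk (fun x => ((powR (p x) alpha)%:C)%C *: proj (psi x)) *m
            blk (fun x => ((powR (p x) g)%:C)%C *: (A x *t (1%:M : 'M[C]_b)))) =
          blk (fun x => ((p x)%:C)%C *: ptr1 (proj (w x))).
  rewrite blk_mul3 ptr_first_blk; apply: blk_ext => x.
  rewrite sc_mul3 -!realCM sc_pow3 ?g3 ?al_neq0 // ptr1Z proj_tens //.
  exact: A_herm.
have E8 : (1%:M : 'M[C]_b) *t mxpow (ptr1 sig) ((alpha - 1) / 2) =
          blk (fun x => ((powR (p x) d)%:C)%C *: (1%:M : 'M[C]_b)).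
  rewrite E1 mxpow_diag //; last by rewrite -d3; apply/eqP => E; move/eqP: al1; apply; lra.
  by rewrite tens1_diag; apply: blk_ext => x; rewrite mxE.
have Npsd x : psd (ptr1 (proj (w x))) by rewrite ptr1_proj; apply: gram_psd.
rewrite E4 E3 E5 E6 E8 blk_mul3.
rewrite (_ : blk _ = blk (fun x => ((powR (p x) alpha)%:C)%C *: ptr1 (proj (w x)))); last first.
  apply: blk_ext => x; rewrite sc_mul3 mul1mx mulmx1 -!realCM sc_pow3' //.
    by rewrite d3.
  by rewrite d3 al_neq0.
rewrite mxpow_blk_scale //; last by exact: ial_neq0.
  rewrite trace_blk realC_sum; apply: eq_bigr => x _.
  rewrite mxtraceZ trNx realCM -powRrM aia powRr1 //.
by move=> x; apply: powR_ge0.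
Qed.

End Ens2.

Section Q10.
Variable R : realType.

Lemma young1 (u s : R) : 0 <= u -> 0 < s < 1 -> powR u s <= s * u + (1 - s).
Proof.
move=> u0 /andP[s0 s1].
have h := @conjugate_powR R (powR u s) 1 (s^-1) ((1 - s)^-1) (powR_ge0 _ _) ler01.
rewrite mulr1 -powRrM mulfV ?gt_eqF // powRr1 // powR1 !invrK in h.
rewrite mulrC [_ * (1 - s)]mulrC mulr1 in h; apply: h.
- by rewrite invr_gt0.
- by rewrite invr_gt0 subr_gt0.
- by rewrite addrC subrK.
Qed.

Lemma jensen_pow k (p U : 'I_k -> R) (s : R) :
  (forall x, 0 <= p x) -> \sum_x p x = 1 -> (forall x, 0 < U x) -> 0 < s < 1 ->
  \sum_x p x * powR (U x) s <= powR (\sum_x p x * U x) s.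
Proof.
move=> p0 ps U0 s01; set m := \sum_x p x * U x.
have m0 : 0 < m.
  have [x px] : exists x, 0 < p x.
    have [x Hx|Hn] := pickP (fun x => 0 < p x); first by exists x.
    exfalso; move: ps; rewrite big1 => [/eqP|x _]; first by rewrite eq_sym oner_eq0.
    by have := p0 x; rewrite le_eqVlt Hn orbF => /eqP <-.
  apply: (lt_le_trans (mulr_gt0 px (U0 x))).
  by rewrite /m (bigD1 x) //= lerDl sumr_ge0 // => y _; rewrite mulr_ge0 // ltW.
have E x : powR (U x) s = powR m s * powR (U x / m) s.
  by rewrite -powRM ?(ltW m0) ?divr_ge0 ?(ltW (U0 x)) ?(ltW m0) // mulrC divfK ?gt_eqF.
under eq_bigr do rewrite E mulrCA.
rewrite -mulr_sumr -[X in _ <= X]mulr1 ler_wpM2l ?powR_ge0 //.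
apply: (@le_trans _ _ (\sum_x p x * (s * (U x / m) + (1 - s)))).
  apply: ler_sum => x _; apply: ler_wpM2l => //; apply: young1 => //.
  by rewrite divr_ge0 ?(ltW (U0 x)) ?(ltW m0).
under eq_bigr do rewrite mulrDr mulrCA.
rewrite big_split /= -mulr_sumr -!mulr_suml ps mul1r.
under eq_bigr do rewrite mulrA.
by rewrite -mulr_suml -/m mulfV ?gt_eqF // mulr1 addrC subrK.
Qed.

End Q10.

Section Q11.
Variable R : realType.

Lemma final_ineq k (p T : 'I_k -> R) (al : R) :
  (forall x, 0 <= p x) -> \sum_x p x = 1 -> (forall x, 0 < T x) ->
  0 < al -> al < 2 -> al != 1 ->
  1 / 2 * (al / (al - 1) * ln (\sum_x p x * T x)) <=
  (2 - al) / al / (1 - (2 - al) / al) *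
    ln (\sum_x p x * powR (T x) (1 / ((2 - al) / al))).
Proof.
move=> p0 ps T0 a0 a2 a1.
have an : al != 0 by rewrite gt_eqF.
have a1n : al - 1 != 0 by rewrite subr_eq0.
set bt := (2 - al) / al.
have bt0 : 0 < bt by rewrite /bt divr_gt0 // subr_gt0.
have pos_sum (U : 'I_k -> R) : (forall x, 0 < U x) -> 0 < \sum_x p x * U x.
  move=> U0; have [x px] : exists x, 0 < p x.
    have [x Hx|Hn] := pickP (fun x => 0 < p x); first by exists x.
    exfalso; move: ps; rewrite big1 => [/eqP|x _]; first by rewrite eq_sym oner_eq0.
    by have := p0 x; rewrite le_eqVlt Hn orbF => /eqP <-.
  apply: (lt_le_trans (mulr_gt0 px (U0 x))).
  by rewrite (bigD1 x) //= lerDl sumr_ge0 // => y _; rewrite mulr_ge0 // ltW.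
set S1 := \sum_x p x * T x.
set S2 := \sum_x p x * powR (T x) (1 / bt).
have S10 : 0 < S1 by apply: pos_sum.
have S20 : 0 < S2 by apply: pos_sum => x; apply: powR_gt0.
set c := al / (2 * (al - 1)).
have eqL : 1 / 2 * (al / (al - 1) * ln S1) = c * ln S1.
  by rewrite /c; field; rewrite a1n.
have eqR : bt / (1 - bt) * ln S2 = c * (bt * ln S2).
  rewrite /c /bt; field; rewrite ?a1n ?an //.
  apply/eqP => E; move/eqP: a1; apply; lra.
rewrite eqL eqR.
have [agt1|alt1] := ltP 1 al.
  have c0 : 0 <= c by rewrite /c divr_ge0 ?ltW // mulr_gt0 // subr_gt0.
  rewrite ler_wpM2l //.
  have bt1 : bt < 1 by rewrite /bt ltr_pdivrMr // mul1r; lra.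
  have s01 : 0 < bt < 1 by rewrite bt0 bt1.
  have J := @jensen_pow _ k p (fun x => powR (T x) (1 / bt)) bt p0 ps
              (fun x => powR_gt0 _ (T0 x)) s01.
  have J' : \sum_x p x * powR (powR (T x) (1 / bt)) bt = S1.
    apply: eq_bigr => x _; rewrite -powRrM mul1r mulVf ?gt_eqF // powRr1 //.
    exact: ltW.
  rewrite J' in J.
  by rewrite -ln_powR ler_ln ?posrE ?powR_gt0.
have alt1' : al < 1 by rewrite lt_neqAle a1.
have den : 2 * (al - 1) < 0 by lra.
have c0 : c <= 0 by rewrite /c ler_ndivrMr // mul0r ltW.
rewrite ler_wnM2l //.
have bt1 : 1 < bt by rewrite /bt ltr_pdivlMr // mul1r; lra.
have s01 : 0 < 1 / bt < 1.
  by rewrite mul1r invr_gt0 bt0 /= invf_lt1.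
have J := @jensen_pow _ k p T (1 / bt) p0 ps T0 s01.
have L : ln S2 <= 1 / bt * ln S1.
  by rewrite -ln_powR ler_ln ?posrE ?powR_gt0.
have := ler_wpM2l (ltW bt0) L.
by rewrite mulrA mul1r mulfV ?gt_eqF // mul1r.
Qed.

End Q11.

Section Ens3.
Variable R : realType.
Local Notation C := R[i].
Variables (a b k : nat) (p : 'I_k -> R) (psi : 'I_k -> 'cV[C]_(a * b)) (alpha : R).
Hypotheses (p0 : forall x, 0 <= p x) (hn : forall x, (adj (psi x) *m psi x) 0 0 = 1)
  (al0 : 0 < alpha) (al2 : alpha < 2) (al1 : alpha != 1).

Lemma sig_mid : ptr_mid (cq_state p psi) = blk (fun x => ((p x)%:C)%C *: PA psi x).
Proof. by rewrite cq_blk ptr_mid_blk; apply: blk_ext => x; rewrite ptr2Z. Qed.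

Lemma cmi_val : renyi_cmi alpha (cq_state p psi) =
  alpha / (alpha - 1) * ln (\sum_x p x * TT psi alpha x).
Proof. by rewrite /renyi_cmi (cmi_tr p0 hn al0 al2 al1). Qed.

Lemma ibet_neq0 : 1 / bet alpha != 0.
Proof. by rewrite mul1r invr_eq0 (bet_neq0 al0 al2). Qed.

Lemma condent_val : renyi_cond_ent (bet alpha) (ptr_mid (cq_state p psi)) =
  bet alpha / (1 - bet alpha) *
    ln (\sum_x p x * powR (TT psi alpha x) (1 / bet alpha)).
Proof.
rewrite /renyi_cond_ent sig_mid mxpow_blk_scale //; first last.
- exact: (bet_neq0 al0 al2).
- by move=> x; apply: (@PA_psd _ _ _ _ psi x).
rewrite ptr1_blk.
have E : (\row_x \tr (((powR (p x) (bet alpha))%:C)%C *: mxpow (PA psi x) (bet alpha)))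
         = rowC (fun x => powR (p x) (bet alpha) * TT psi alpha x).
  apply/rowP=> x; rewrite !mxE mxtraceZ realCM.
  by case: (TT_prop hn al0 al2 x) => ->.
have nn x : 0 <= powR (p x) (bet alpha) * TT psi alpha x.
  by rewrite mulr_ge0 ?powR_ge0 // ltW //; case: (TT_prop hn al0 al2 x).
rewrite E (mxpow_diag nn ibet_neq0) mxtrace_diag.
congr (_ * ln _).
rewrite (eq_bigr (fun x => ((p x * powR (TT psi alpha x) (1 / bet alpha))%:C)%C)).
  by rewrite -realC_sum.
move=> x _; rewrite mxE; congr ((_)%:C)%C.
rewrite powRM ?powR_ge0 // ?ltW //; last by case: (TT_prop hn al0 al2 x).
by rewrite -powRrM mul1r mulfV ?(bet_neq0 al0 al2) // powRr1.
Qed.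

Lemma psd_add n (A B : 'M[C]_n) : psd A -> psd B -> psd (A + B).
Proof.
move=> [hA qA] [hB qB]; split; first by rewrite hadjD hA hB.
by move=> v; rewrite mulmxDr mulmxDl mxE addr_ge0.
Qed.

Lemma psd0 n : psd (0 : 'M[C]_n).
Proof.
split; first by apply/matrixP=> i j; rewrite !mxE conjC0.
by move=> v; rewrite mulmx0 mul0mx mxE.
Qed.

Lemma psd_scale n (c : R) (A : 'M[C]_n) : 0 <= c -> psd A -> psd ((c%:C)%C *: A).
Proof.
move=> c0 [hA qA]; split; first exact: herm_scale.
by move=> v; rewrite -scalemxAr -scalemxAl mxE mulr_ge0 // ler0c.
Qed.

Lemma proj_tensd (v : 'cV[C]_(a * b)) (x : 'I_k) :
  proj v *t delta_mx x x = proj (v *t (delta_mx x 0 : 'cV[C]_k)).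
Proof.
rewrite /proj (@hadj_tens R _ _ _ _ v (delta_mx x 0 : 'cV[C]_k)) (@tensmx_mul C _ _ _ _ _ _ v (delta_mx x 0 : 'cV[C]_k) (adj v) (adj (delta_mx x 0 : 'cV[C]_k))); congr (_ *t _).
apply/matrixP=> i j; rewrite !mxE big_ord1 !mxE.
case: (i == x); case: (j == x); rewrite /= ?mul0r ?mul1r ?conjC0 ?conjC1 //.
Qed.

Lemma sig_density : \sum_x p x = 1 -> density (cq_state p psi).
Proof.
move=> ps; split.
  rewrite /cq_state; apply: (@big_ind _ (fun M : 'M[C]_(a * b * k) => psd M)); [exact: psd0 | exact: psd_add|].
  by move=> x _; apply: psd_scale => //; rewrite proj_tensd; apply: gram_psd.
rewrite cq_blk trace_blk (eq_bigr (fun x => ((p x)%:C)%C)).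
  by rewrite -realC_sum ps.
by move=> x _; rewrite mxtraceZ tr_proj hn mulr1.
Qed.

Lemma sig_ptr2 : ptr2 (cq_state p psi) = \sum_x ((p x)%:C)%C *: proj (psi x).
Proof. by rewrite cq_blk ptr2_blk. Qed.

End Ens3.

Theorem proposition6 (R : realType) (alpha : R) (dA dB : nat)
    (rho : 'M[R[i]]_(dA * dB)) :
  0 < alpha < 2 -> alpha != 1 -> density rho ->
  (renyi_sq_ent alpha rho <= renyi_eof ((2 - alpha) / alpha) rho)%E.
Proof.
move=> /andP[a0 a2] a1 _.
rewrite /renyi_sq_ent /renyi_eof.
apply/ereal_infP => y [k [p [psi [p0 [ps [hn [rhoE ->]]]]]]].
have H1 := @ereal_inf_lbound _
  [set x : \bar R | exists (e : nat) (omega : 'M[R[i]]_(dA * dB * e)),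
         density omega /\ ptr2 omega = rho /\ x = (renyi_cmi alpha omega)%:E]
  (renyi_cmi alpha (cq_state p psi))%:E.
have H2 : (ereal_inf
  [set x : \bar R | exists (e : nat) (omega : 'M[R[i]]_(dA * dB * e)),
         density omega /\ ptr2 omega = rho /\ x = (renyi_cmi alpha omega)%:E]
   <= (renyi_cmi alpha (cq_state p psi))%:E)%E.
  apply: H1; exists k, (cq_state p psi); split; first exact: sig_density.
  by split => //; rewrite sig_ptr2 rhoE.
apply: le_trans (lee_wpmul2l _ H2) _; first by rewrite lee_fin divr_ge0.
rewrite -EFinM lee_fin (cmi_val p0 hn a0 a2 a1).
have := condent_val p0 hn a0 a2; rewrite /bet => ->.
exact: (final_ineq p0 ps (fun x => (TT_prop hn a0 a2 x).2) a0 a2 a1).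
Qed.
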